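(* Let $X\sim\mathrm{ECR}(\beta,\lambda)$. Then $$\mathbb E(\log X)=\log\lambda+\tfrac12\,\Phi\!\left(\tfrac12;1,\beta\right)+\psi(1+\beta)+\gamma-\frac1\beta.$$
   Context: The exponentiated Cauchy–Rayleigh distribution $\mathrm{ECR}(\beta,\lambda)$, with shape parameter $\beta>0$ and scale parameter $\lambda>0$, is the distribution on $(0,\infty)$ with cdf $F(x)=\left(1-\frac{\lambda}{\sqrt{\lambda^2+x^2}}\right)^{\beta}$ for $x>0$. $\Phi(z;s,a)=\sum_{n=0}^\infty \frac{z^n}{(n+a)^s}$ is the Lerch transcendent, $\psi=\Gamma'/\Gamma$ is the digamma function, and $\gamma=0.57721\ldots$ is the Euler–Mascheroni constant. *)

(* Defs.v *)
From Stdlib Require Import Reals.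
Open Scope R_scope.

Definition improper_int_0_inf (f : R -> R) (l : R) : Prop :=
  forall eps : R, 0 < eps ->
    exists d M : R, 0 < d /\
      forall a b : R, 0 < a -> a < d -> M < b ->
        exists pr : Riemann_integrable f a b, Rabs (RiemannInt pr - l) < eps.

Definition ECR_cdf (beta lambda x : R) : R :=
  Rpower (1 - lambda / sqrt (lambda ^ 2 + x ^ 2)) beta.

Definition is_Gamma (G : R -> R) : Prop :=
  forall s : R, 0 < s ->
    improper_int_0_inf (fun t => Rpower t (s - 1) * exp (- t)) (G s).

Definition is_euler_gamma (g : R) : Prop :=
  Un_cv (fun n => sum_f_R0 (fun k => / INR (S k)) n - ln (INR (S n))) g.

Definition is_Lerch (z s a v : R) : Prop :=
  infinite_sum (fun n => z ^ n / Rpower (INR n + a) s) v.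

(* Main.v *)
Require Import Defs.
From Stdlib Require Import Reals Lra Lia ZArith.
From Coquelicot Require Import Coquelicot.
Open Scope R_scope.

Lemma ctn (f : R -> R) x : ex_derive f x -> continuous f x.
Proof. intro H. exact (ex_derive_continuous (K:=R_AbsRing) (V:=R_NormedModule) f x H). Qed.

Definition IMP (g : R -> R) (l : R) := forall eps, 0 < eps -> exists d M, 0 < d /\
  forall a b, 0 < a -> a < d -> M < b -> Rabs (RInt g a b - l) < eps.

Definition CP (g : R -> R) := forall x, 0 < x -> continuous g x.

Lemma exR g a b : CP g -> 0 < a -> 0 < b -> ex_RInt g a b.
Proof. intros Hg Ha Hb. apply (ex_RInt_continuous (V:=R_CompleteNormedModule)). intros z Hz. apply Hg.
  destruct Hz as [Hz _]. unfold Rmin in Hz. destruct (Rle_dec a b); lra. Qed.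

Lemma imp_of g l : improper_int_0_inf g l -> IMP g l.
Proof. intros H eps He. destruct (H eps He) as [d [M [Hd H']]]. exists d, M. split; auto.
  intros a b Ha Had Hb. destruct (H' a b Ha Had Hb) as [pr Hpr].
  rewrite (RInt_Reals g a b pr). exact Hpr. Qed.

Lemma imp_to g l : CP g -> IMP g l -> improper_int_0_inf g l.
Proof. intros Hg H eps He. destruct (H eps He) as [d [M [Hd H']]].
  exists (Rmin d 1), (Rmax M 1). split. apply Rmin_glb_lt; lra.
  intros a b Ha Had Hb.
  assert (a < d) by (eapply Rlt_le_trans; [exact Had| apply Rmin_l]).
  assert (a < 1) by (eapply Rlt_le_trans; [exact Had| apply Rmin_r]).
  assert (M < b) by (eapply Rle_lt_trans; [apply Rmax_l | exact Hb]).
  assert (1 < b) by (eapply Rle_lt_trans; [apply Rmax_r | exact Hb]).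
  exists (ex_RInt_Reals_0 g a b (exR g a b Hg Ha ltac:(lra))).
  rewrite <- RInt_Reals. apply H'; auto. Qed.

Lemma pick2 d1 M1 d2 M2 : 0 < d1 -> 0 < d2 -> exists a b, 0 < a /\ a < d1 /\ a < d2 /\ a < 1 /\
   M1 < b /\ M2 < b /\ 2 < b.
Proof. intros. exists (Rmin (Rmin d1 d2) 1 / 2), (Rmax (Rmax M1 M2) 2 + 1).
  assert (0 < Rmin (Rmin d1 d2) 1) by (repeat apply Rmin_glb_lt; lra).
  pose proof (Rmin_l (Rmin d1 d2) 1). pose proof (Rmin_r (Rmin d1 d2) 1).
  pose proof (Rmin_l d1 d2). pose proof (Rmin_r d1 d2).
  pose proof (Rmax_l (Rmax M1 M2) 2). pose proof (Rmax_r (Rmax M1 M2) 2).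
  pose proof (Rmax_l M1 M2). pose proof (Rmax_r M1 M2). repeat split; lra. Qed.

Lemma imp_le g h lg lh : CP g -> CP h -> (forall x, 0 < x -> g x <= h x) ->
  IMP g lg -> IMP h lh -> lg <= lh.
Proof. intros Cg Ch Hle Ig Ih. destruct (Rle_or_lt lg lh) as [|Hlt]; auto.
  exfalso. set (e := (lg - lh)/2). assert (He : 0 < e) by (unfold e; lra).
  destruct (Ig e He) as [d1 [M1 [Hd1 H1]]]. destruct (Ih e He) as [d2 [M2 [Hd2 H2]]].
  destruct (pick2 d1 M1 d2 M2 Hd1 Hd2) as [a [b [? [? [? [? [? [? ?]]]]]]]].
  specialize (H1 a b ltac:(lra) ltac:(lra) ltac:(lra)).
  specialize (H2 a b ltac:(lra) ltac:(lra) ltac:(lra)).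
  assert (RInt g a b <= RInt h a b).
  { apply RInt_le; try lra; try (apply exR; auto; lra). intros x Hx. apply Hle; lra. }
  apply Rabs_def2 in H1. apply Rabs_def2 in H2. unfold e in *. lra. Qed.

Lemma RInt_lin (g1 g2 : R -> R) c1 c2 a b : ex_RInt g1 a b -> ex_RInt g2 a b ->
  RInt (fun x => c1 * g1 x + c2 * g2 x) a b = c1 * RInt g1 a b + c2 * RInt g2 a b.
Proof. intros E1 E2. apply is_RInt_unique.
  apply (is_RInt_plus (fun x => c1 * g1 x) (fun x => c2 * g2 x)).
  - apply (is_RInt_scal g1). apply (RInt_correct (V:=R_CompleteNormedModule)); auto.
  - apply (is_RInt_scal g2). apply (RInt_correct (V:=R_CompleteNormedModule)); auto. Qed.

Lemma imp_lin g1 g2 l1 l2 c1 c2 : CP g1 -> CP g2 -> IMP g1 l1 -> IMP g2 l2 ->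
  IMP (fun x => c1 * g1 x + c2 * g2 x) (c1 * l1 + c2 * l2).
Proof. intros C1 C2 I1 I2 eps He.
  set (k := Rabs c1 + Rabs c2 + 1). assert (Hk : 0 < k) by (unfold k; pose proof (Rabs_pos c1); pose proof (Rabs_pos c2); lra).
  assert (He' : 0 < eps / k) by (apply Rdiv_lt_0_compat; auto).
  destruct (I1 _ He') as [d1 [M1 [Hd1 H1]]]. destruct (I2 _ He') as [d2 [M2 [Hd2 H2]]].
  exists (Rmin (Rmin d1 d2) 1), (Rmax (Rmax M1 M2) 1). split. repeat apply Rmin_glb_lt; lra.
  intros a b Ha Had Hb.
  pose proof (Rmin_l (Rmin d1 d2) 1). pose proof (Rmin_r (Rmin d1 d2) 1).
  pose proof (Rmin_l d1 d2). pose proof (Rmin_r d1 d2).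
  pose proof (Rmax_l (Rmax M1 M2) 1). pose proof (Rmax_r (Rmax M1 M2) 1).
  pose proof (Rmax_l M1 M2). pose proof (Rmax_r M1 M2).
  specialize (H1 a b ltac:(lra) ltac:(lra) ltac:(lra)).
  specialize (H2 a b ltac:(lra) ltac:(lra) ltac:(lra)).
  rewrite RInt_lin by (apply exR; auto; lra).
  replace (c1 * RInt g1 a b + c2 * RInt g2 a b - (c1 * l1 + c2 * l2)) with
    (c1 * (RInt g1 a b - l1) + c2 * (RInt g2 a b - l2)) by ring.
  eapply Rle_lt_trans. apply Rabs_triang. rewrite !Rabs_mult.
  assert (Rabs c1 * Rabs (RInt g1 a b - l1) <= Rabs c1 * (eps / k)) by
    (apply Rmult_le_compat_l; [apply Rabs_pos| lra]).
  assert (Rabs c2 * Rabs (RInt g2 a b - l2) <= Rabs c2 * (eps / k)) by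
    (apply Rmult_le_compat_l; [apply Rabs_pos| lra]).
  assert (Rabs c1 * (eps/k) + Rabs c2 * (eps/k) < eps).
  { assert (Ek: Rabs c1 + Rabs c2 = k - 1) by (unfold k; ring).
    replace (Rabs c1 * (eps/k) + Rabs c2 * (eps/k)) with ((Rabs c1 + Rabs c2) * (eps/k)) by ring.
    rewrite Ek. replace ((k - 1) * (eps / k)) with (eps - eps / k) by (field; lra). lra. }
  lra. Qed.

Lemma imp_pos g l : CP g -> (forall x, 0 < x -> 0 < g x) -> IMP g l -> 0 < l.
Proof. intros C Hp I.
  assert (Hc : 0 < RInt g 1 2). { apply RInt_gt_0; try lra. intros; apply Hp; lra. intros; apply C; lra. }
  destruct (I _ (ltac:(lra) : 0 < RInt g 1 2 / 2)) as [d [M [Hd H]]].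
  destruct (pick2 d M d M Hd Hd) as [a [b [? [? [? [? [? [? ?]]]]]]]].
  specialize (H a b ltac:(lra) ltac:(lra) ltac:(lra)).
  assert (E : RInt g a b = RInt g a 1 + RInt g 1 2 + RInt g 2 b).
  { rewrite <- (RInt_Chasles g a 1 b) by (apply exR; auto; lra).
    rewrite <- (RInt_Chasles g 1 2 b) by (apply exR; auto; lra). unfold plus; simpl. ring. }
  assert (0 <= RInt g a 1) by (apply RInt_ge_0; try lra; [apply exR; auto; lra| intros; left; apply Hp; lra]).
  assert (0 <= RInt g 2 b) by (apply RInt_ge_0; try lra; [apply exR; auto; lra| intros; left; apply Hp; lra]).
  apply Rabs_def2 in H. lra. Qed.


Definition gam (s t : R) := Rpower t (s - 1) * exp (- t).
Lemma gam_CP s : CP (gam s).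
Proof. intros t Ht. apply ctn. unfold gam, Rpower. auto_derive. exact Ht. Qed.
Lemma gam_pos s t : 0 < gam s t.
Proof. unfold gam, Rpower. apply Rmult_lt_0_compat; apply exp_pos. Qed.

Lemma G_pos G s : is_Gamma G -> 0 < s -> 0 < G s.
Proof. intros HG Hs. apply (imp_pos (gam s)). apply gam_CP. intros; apply gam_pos.
  apply imp_of. apply HG; auto. Qed.

Lemma imp_unique g l1 l2 : CP g -> IMP g l1 -> IMP g l2 -> l1 = l2.
Proof. intros C I1 I2. apply Rle_antisym; eapply imp_le; eauto; intros; lra. Qed.

Lemma ln_le_sub1 y : 0 < y -> ln y <= y - 1.
Proof. intro Hy. pose proof (exp_ineq1_le (ln y)). rewrite exp_ln in H; lra. Qed.

Lemma exp_lt_of x e : 0 < e -> x < ln e -> exp x < e.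
Proof. intros He Hx. rewrite <- (exp_ln e) by auto. apply exp_increasing; auto. Qed.

Lemma lim0_pow s : 0 < s -> forall e, 0 < e -> exists d, 0 < d /\
  forall a, 0 < a -> a < d -> Rpower a s * exp (- a) < e.
Proof. intros Hs e He. exists (exp (ln e / s)). split. apply exp_pos.
  intros a Ha Had. unfold Rpower. rewrite <- exp_plus. apply exp_lt_of; auto.
  assert (ln a < ln e / s). { rewrite <- (ln_exp (ln e / s)). apply ln_increasing; auto. }
  assert (s * ln a < ln e). { replace (ln e) with (s * (ln e / s)) by (field; lra). apply Rmult_lt_compat_l; auto. }
  lra. Qed.

Lemma liminf_pow s : 0 < s -> forall e, 0 < e -> exists M, 1 <= M /\
  forall b, M < b -> Rpower b s * exp (- b) < e.
Proof. intros Hs e He. exists (Rmax 1 (2 * (s * ln (2*s) - ln e))). split. apply Rmax_l.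
  intros b Hb. pose proof (Rmax_l 1 (2 * (s * ln (2*s) - ln e))). pose proof (Rmax_r 1 (2 * (s * ln (2*s) - ln e))).
  unfold Rpower. rewrite <- exp_plus. apply exp_lt_of; auto.
  assert (Hy : 0 < b / (2*s)) by (apply Rdiv_lt_0_compat; lra).
  pose proof (ln_le_sub1 _ Hy). rewrite ln_div in H1 by lra.
  assert (s * ln b <= s * (ln (2*s) + b / (2*s) - 1)) by (apply Rmult_le_compat_l; lra).
  replace (s * (ln (2*s) + b / (2*s) - 1)) with (s * ln (2*s) + b/2 - s) in H2 by (field; lra).
  lra. Qed.

Lemma gam_rec_RInt s a b : 0 < s -> 0 < a -> 0 < b ->
  RInt (gam (s+1)) a b = s * RInt (gam s) a b +
     ((- (Rpower b s * exp (- b))) - (- (Rpower a s * exp (- a)))).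
Proof. intros Hs Ha Hb.
  set (F := fun t => - (Rpower t s * exp (- t))).
  assert (HI : is_RInt (fun t => gam (s+1) t - s * gam s t) a b (F b - F a)).
  { apply (is_RInt_derive (V:=R_CompleteNormedModule) F).
    - intros x Hx. assert (0 < x) by (unfold Rmin, Rmax in Hx; destruct (Rle_dec a b); lra).
      unfold F, gam, Rpower. auto_derive. lra.
      replace (s + 1 - 1) with s by ring.
      replace ((s - 1) * ln x) with (s * ln x + - ln x) by ring.
      rewrite exp_plus, (exp_Ropp (ln x)), exp_ln by lra. field. lra.
    - intros x Hx. assert (0 < x) by (unfold Rmin, Rmax in Hx; destruct (Rle_dec a b); lra).
      apply ctn. unfold gam, Rpower. auto_derive. lra. }
  apply (is_RInt_unique (V:=R_CompleteNormedModule)) in HI.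
  assert (E : RInt (fun t => gam (s+1) t - s * gam s t) a b = 1 * RInt (gam (s+1)) a b + (-s) * RInt (gam s) a b).
  { rewrite <- RInt_lin by (apply exR; auto; apply gam_CP). apply (RInt_ext (V:=R_CompleteNormedModule)). intros; simpl; ring. }
  rewrite HI in E. unfold F in E. lra. Qed.

Lemma G_rec G s : is_Gamma G -> 0 < s -> G (s + 1) = s * G s.
Proof. intros HG Hs. apply (imp_unique (gam (s+1))). apply gam_CP.
  apply imp_of, HG; lra.
  intros eps He.
  assert (Hk : 0 < eps / (2 * (s+1))) by (apply Rdiv_lt_0_compat; lra).
  destruct (imp_of _ _ (HG s Hs) _ Hk) as [d [M [Hd H]]].
  destruct (lim0_pow s Hs (eps/4) ltac:(lra)) as [d1 [Hd1 H1]].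
  destruct (liminf_pow s Hs (eps/4) ltac:(lra)) as [M1 [HM1 H2]].
  exists (Rmin d d1), (Rmax M M1). split. apply Rmin_glb_lt; lra.
  intros a b Ha Had Hb.
  pose proof (Rmin_l d d1). pose proof (Rmin_r d d1). pose proof (Rmax_l M M1). pose proof (Rmax_r M M1).
  specialize (H a b Ha ltac:(lra) ltac:(lra)). specialize (H1 a Ha ltac:(lra)). specialize (H2 b ltac:(lra)).
  assert (P1 : 0 < Rpower a s * exp (- a)) by (unfold Rpower; apply Rmult_lt_0_compat; apply exp_pos).
  assert (P2 : 0 < Rpower b s * exp (- b)) by (unfold Rpower; apply Rmult_lt_0_compat; apply exp_pos).
  rewrite gam_rec_RInt by lra. change (fun t => Rpower t (s - 1) * exp (- t)) with (gam s) in H.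
  assert (Habs : s * Rabs (RInt (gam s) a b - G s) <= s * (eps / (2*(s+1)))). apply Rmult_le_compat_l. lra. lra.
  assert (Rabs (s * (RInt (gam s) a b - G s)) = s * Rabs (RInt (gam s) a b - G s)) by (rewrite Rabs_mult, (Rabs_pos_eq s); lra).
  assert (s * (eps / (2*(s+1))) < eps / 2). { apply (Rmult_lt_reg_r (2*(s+1))). lra. field_simplify; lra. }
  replace (s * RInt (gam s) a b + (- (Rpower b s * exp (- b)) - - (Rpower a s * exp (- a))) - s * G s)
    with (s * (RInt (gam s) a b - G s) + (Rpower a s * exp (- a) - Rpower b s * exp (- b))) by ring.
  eapply Rle_lt_trans. apply Rabs_triang.
  assert (Rabs (Rpower a s * exp (- a) - Rpower b s * exp (- b)) < eps / 2) by (apply Rabs_def1; lra).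
  lra. Qed.

Lemma exp_convex th p q : 0 <= th <= 1 ->
  exp (th * p + (1 - th) * q) <= th * exp p + (1 - th) * exp q.
Proof. intros Hth. set (r := th * p + (1 - th) * q).
  assert (E1 : exp p = exp r * exp (p - r)) by (rewrite <- exp_plus; f_equal; ring).
  assert (E2 : exp q = exp r * exp (q - r)) by (rewrite <- exp_plus; f_equal; ring).
  pose proof (exp_ineq1_le (p - r)). pose proof (exp_ineq1_le (q - r)). pose proof (exp_pos r).
  rewrite E1, E2.
  assert (th * exp (p - r) + (1 - th) * exp (q - r) >= 1).
  { assert (th * exp (p - r) >= th * (1 + (p - r))) by (apply Rle_ge, Rmult_le_compat_l; lra).
    assert ((1-th) * exp (q - r) >= (1-th) * (1 + (q - r))) by (apply Rle_ge, Rmult_le_compat_l; lra).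
    unfold r in *. nra. }
  nra. Qed.

Lemma gam_exp s t : 0 < t -> gam s t = exp ((s - 1) * ln t - t).
Proof. intros. unfold gam, Rpower. rewrite <- exp_plus. f_equal. Qed.

Lemma G_lc G a b th : is_Gamma G -> 0 < a -> 0 < b -> 0 <= th <= 1 ->
  ln (G (th * a + (1 - th) * b)) <= th * ln (G a) + (1 - th) * ln (G b).
Proof. intros HG Ha Hb Hth.
  set (c := th * a + (1 - th) * b). assert (Hc : 0 < c) by (unfold c; nra).
  set (K := th * ln (G a) + (1 - th) * ln (G b)).
  pose proof (G_pos G a HG Ha). pose proof (G_pos G b HG Hb). pose proof (G_pos G c HG Hc).
  assert (Hle : G c <= (th * exp K / G a) * G a + ((1 - th) * exp K / G b) * G b).
  { apply (imp_le (gam c) (fun t => (th * exp K / G a) * gam a t + ((1 - th) * exp K / G b) * gam b t)).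
    - apply gam_CP.
    - intros t Ht. apply ctn. unfold gam, Rpower. auto_derive. lra.
    - intros t Ht. rewrite !gam_exp by auto.
      replace ((c - 1) * ln t - t) with (th * (K - ln (G a) + ((a - 1) * ln t - t)) + (1 - th) * (K - ln (G b) + ((b - 1) * ln t - t)))
        by (unfold K, c; ring).
      eapply Rle_trans. apply exp_convex; auto.
      right. unfold Rminus. rewrite !exp_plus, (exp_Ropp (ln (G a))), (exp_Ropp (ln (G b))), !exp_ln by auto. field. lra.
    - apply imp_of, HG; auto.
    - apply imp_lin. apply gam_CP. apply gam_CP. apply imp_of, HG; auto. apply imp_of, HG; auto. }
  replace ((th * exp K / G a) * G a + ((1 - th) * exp K / G b) * G b) with (exp K) in Hle by (field; lra).
  rewrite <- (ln_exp K). apply ln_le; auto. Qed.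

Fixpoint hs (x : R) (n : nat) : R := match n with O => 0 | S m => hs x m + / (x + INR m) end.
Fixpoint lsum (x : R) (n : nat) : R := match n with O => 0 | S m => lsum x m + ln (x + INR m) end.

Lemma lnG_shift G z n : is_Gamma G -> 0 < z -> ln (G (z + INR n)) = ln (G z) + lsum z n.
Proof. intros HG Hz. induction n as [|n IH]; cbn [lsum hs].
  - rewrite Rplus_0_r. ring.
  - pose proof (pos_INR n). rewrite S_INR. replace (z + (INR n + 1)) with ((z + INR n) + 1) by ring.
    rewrite G_rec by (auto; lra). rewrite ln_mult; [| lra | apply G_pos; auto; lra]. rewrite IH. ring. Qed.

Lemma dln_shift x c : 0 < x + c -> derivable_pt_lim (fun z => ln (z + c)) x (/ (x + c)).
Proof. intro H. apply is_derive_Reals. auto_derive. lra. field. lra. Qed.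

Lemma phi_deriv G x0 dG n : 0 < x0 -> 0 < G x0 -> derivable_pt_lim G x0 dG ->
  derivable_pt_lim (fun z => ln (G z) + lsum z n) x0 (dG / G x0 + hs x0 n).
Proof. intros Hx HGx HD. induction n as [|n IH]; cbn [lsum hs].
  - replace (dG / G x0 + 0) with (/ G x0 * dG) by (field; lra).
    apply (derivable_pt_lim_ext (fun z => ln (G z))). intros; ring.
    apply (derivable_pt_lim_comp G ln). auto. apply derivable_pt_lim_ln; auto.
  - replace (dG / G x0 + (hs x0 n + / (x0 + INR n))) with ((dG / G x0 + hs x0 n) + / (x0 + INR n)) by ring.
    apply (derivable_pt_lim_ext (fun z => (ln (G z) + lsum z n) + ln (z + INR n))). intros; ring.
    apply (derivable_pt_lim_plus (fun z => ln (G z) + lsum z n) (fun z => ln (z + INR n))). auto.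
    apply dln_shift. pose proof (pos_INR n). lra. Qed.

Lemma slope_bounds G y h : is_Gamma G -> 1 < y -> 0 < h < 1 ->
  h * ln (y - 1) <= ln (G (y + h)) - ln (G y) <= h * ln y.
Proof. intros HG Hy Hh.
  assert (R1 : ln (G (y + 1)) = ln y + ln (G y)).
  { rewrite G_rec by (auto; lra). apply ln_mult; [lra| apply G_pos; auto; lra]. }
  assert (R2 : ln (G y) = ln (y - 1) + ln (G (y - 1))).
  { replace y with ((y - 1) + 1) at 1 by ring. rewrite G_rec by (auto; lra). apply ln_mult; [lra| apply G_pos; auto; lra]. }
  split.
  - pose proof (G_lc G (y - 1) (y + h) (h / (1 + h)) HG ltac:(lra) ltac:(lra)) as L.
    assert (0 <= h / (1 + h) <= 1). { split. apply Rdiv_le_0_compat; lra. apply (Rmult_le_reg_r (1+h)). lra. field_simplify; lra. }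
    specialize (L H).
    replace (h / (1 + h) * (y - 1) + (1 - h / (1 + h)) * (y + h)) with y in L by (field; lra).
    rewrite R2 in L at 1. rewrite R2.
    assert (L2 : (1 + h) * (ln (y - 1) + ln (G (y - 1))) <= (1 + h) * (h / (1 + h) * ln (G (y - 1)) + (1 - h / (1 + h)) * ln (G (y + h)))) by (apply Rmult_le_compat_l; lra).
    replace ((1 + h) * (h / (1 + h) * ln (G (y - 1)) + (1 - h / (1 + h)) * ln (G (y + h)))) with (h * ln (G (y - 1)) + ln (G (y + h))) in L2 by (field; lra).
    nra.
  - pose proof (G_lc G (y + 1) y h HG ltac:(lra) ltac:(lra) ltac:(lra)) as L.
    replace (h * (y + 1) + (1 - h) * y) with (y + h) in L by ring.
    rewrite R1 in L. nra. Qed.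

Lemma D_bounds G beta dG n : is_Gamma G -> 0 < beta -> derivable_pt_lim G (1 + beta) dG ->
  ln (beta + INR n) <= dG / G (1 + beta) + hs (1 + beta) n <= ln (1 + beta + INR n).
Proof. intros HG Hb HD.
  set (x0 := 1 + beta). set (y := x0 + INR n). pose proof (pos_INR n).
  assert (Hy : 1 < y) by (unfold y, x0; lra).
  assert (HGx : 0 < G x0) by (apply G_pos; auto; unfold x0; lra).
  pose proof (phi_deriv G x0 dG n ltac:(unfold x0; lra) HGx HD) as PD.
  set (L := dG / G x0 + hs x0 n) in *.
  assert (Key : forall h, 0 < h < 1 -> ln (y - 1) <= ((ln (G (x0 + h)) + lsum (x0 + h) n) - (ln (G x0) + lsum x0 n)) / h <= ln y).
  { intros h Hh. rewrite <- !lnG_shift by (auto; unfold x0; lra).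
    replace (x0 + h + INR n) with (y + h) by (unfold y; ring). fold y.
    pose proof (slope_bounds G y h HG Hy Hh) as [S1 S2]. split.
    - apply (Rmult_le_reg_r h). lra. unfold Rdiv. rewrite Rmult_assoc, Rinv_l by lra. lra.
    - apply (Rmult_le_reg_r h). lra. unfold Rdiv. rewrite Rmult_assoc, Rinv_l by lra. lra. }
  assert (Near : forall eps, 0 < eps -> exists h, 0 < h < 1 /\
     Rabs (((ln (G (x0 + h)) + lsum (x0 + h) n) - (ln (G x0) + lsum x0 n)) / h - L) < eps).
  { intros eps He. destruct (PD eps He) as [del Hdel].
    exists (Rmin del 1 / 2). pose proof (cond_pos del). pose proof (Rmin_l del 1). pose proof (Rmin_r del 1).
    assert (0 < Rmin del 1) by (apply Rmin_glb_lt; lra).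
    split. lra. apply Hdel. lra. rewrite Rabs_pos_eq; lra. }
  replace (ln (beta + INR n)) with (ln (y - 1)) by (unfold y, x0; f_equal; ring).
  fold x0. fold y. split.
  - apply le_epsilon. intros eps He. destruct (Near eps He) as [h [Hh Hn]].
    apply Rabs_def2 in Hn. pose proof (Key h Hh). lra.
  - apply le_epsilon. intros eps He. destruct (Near eps He) as [h [Hh Hn]].
    apply Rabs_def2 in Hn. pose proof (Key h Hh). lra. Qed.

Definition cS (beta : R) (n : nat) := / (INR n + 1) - / (INR n + 1 + beta).

Lemma sum_cS beta n : 0 < beta ->
  sum_f_R0 (cS beta) n = sum_f_R0 (fun k => / INR (S k)) n - hs (1 + beta) (S n).
Proof. intro Hb. induction n as [|n IH].
  - cbn [sum_f_R0 hs]. unfold cS. rewrite S_INR. simpl INR. replace (1 + beta + 0) with (0 + 1 + beta) by ring. ring.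
  - rewrite !tech5 (* sum_f_R0 f (S n) = sum_f_R0 f n + f (S n) *). rewrite IH. cbn [hs]. unfold cS.
    rewrite (S_INR (S n)). replace (1 + beta + INR (S n)) with (INR (S n) + 1 + beta) by ring. ring. Qed.

Lemma S_series G beta dG g : is_Gamma G -> 0 < beta -> derivable_pt_lim G (1 + beta) dG ->
  is_euler_gamma g -> is_series (cS beta) (dG / G (1 + beta) + g).
Proof. intros HG Hb HD Hg. apply is_series_Reals. intros eps He.
  destruct (Hg (eps/2) ltac:(lra)) as [N1 HN1].
  destruct (archimed ((beta + 1) / (eps / 2))) as [Ha _].
  assert (Hup : (0 <= up ((beta + 1) / (eps / 2)))%Z).
  { apply le_IZR. assert (0 < (beta+1)/(eps/2)) by (apply Rdiv_lt_0_compat; lra). lra. }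
  exists (Nat.max N1 (Z.to_nat (up ((beta + 1) / (eps / 2))))).
  intros n Hn. unfold R_dist. rewrite sum_cS by auto.
  assert (n >= N1)%nat by lia.
  specialize (HN1 n H). unfold R_dist in HN1.
  pose proof (D_bounds G beta dG (S n) HG Hb HD) as [B1 B2].
  set (D := dG / G (1 + beta)) in *. set (hsn := hs (1 + beta) (S n)) in *.
  set (Hn1 := sum_f_R0 (fun k => / INR (S k)) n) in *.
  pose proof (pos_INR n). rewrite S_INR in *.
  assert (P1 : ln (INR n + 1) <= ln (beta + (INR n + 1))) by (apply ln_le; lra).
  assert (P2 : ln (1 + beta + (INR n + 1)) - ln (INR n + 1) <= (beta + 1) / (INR n + 1)).
  { rewrite <- ln_div by lra. eapply Rle_trans. apply ln_le_sub1. apply Rdiv_lt_0_compat; lra.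
    right. field. lra. }
  assert (P3 : (beta + 1) / (INR n + 1) < eps / 2).
  { assert (INR (Z.to_nat (up ((beta + 1) / (eps / 2)))) <= INR n) by (apply le_INR; lia).
    rewrite INR_IZR_INZ, Z2Nat.id in H1 by auto.
    apply (Rmult_lt_reg_r (INR n + 1)). lra. unfold Rdiv. rewrite Rmult_assoc, Rinv_l by lra.
    assert ((beta + 1) / (eps / 2) < INR n + 1) by lra.
    apply (Rmult_lt_reg_r (/ (eps / 2))). apply Rinv_0_lt_compat; lra.
    replace ((beta + 1) * 1 * / (eps / 2)) with ((beta + 1) / (eps / 2)) by (unfold Rdiv; ring).
    replace (eps * / 2 * (INR n + 1) * / (eps / 2)) with (INR n + 1) by (field; lra). lra. }
  apply Rabs_def2 in HN1. apply Rabs_def1; lra. Qed.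


Lemma rad1 (a : nat -> R) : (forall n, Rabs (a n) <= 1) -> forall y, Rabs y < 1 -> Rbar_lt (Rabs y) (CV_radius a).
Proof. intros Ha y Hy.
  assert (H1 : Rbar_le 1 (CV_radius a)).
  { destruct (CV_radius_bounded a) as [Hub _]. apply Hub. exists 1. intros n.
    rewrite pow1, Rmult_1_r. auto. }
  destruct (CV_radius a) as [r| |]; simpl in *; auto; lra. Qed.

Lemma ps_is (a : nat -> R) y : Rbar_lt (Rabs y) (CV_radius a) -> is_series (fun k => a k * y ^ k) (PSeries a y).
Proof. intro H. apply Series_correct. apply ex_series_Rabs. apply CV_disk_inside. auto. Qed.

Lemma ps_der_shift (a : nat -> R) y : Rbar_lt (Rabs y) (CV_radius a) ->
  is_series (fun n => INR n * a n * y ^ n) (y * PSeries (PS_derive a) y).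
Proof. intro H.
  assert (H' : Rbar_lt (Rabs y) (CV_radius (PS_derive a))) by (rewrite CV_radius_derive; auto).
  pose proof (ps_is _ _ H') as S1.
  pose proof (is_series_scal y _ _ S1) as S2.
  apply (is_series_decr_1 (fun n => INR n * a n * y ^ n)).
  match goal with |- is_series _ ?l => replace l with (y * PSeries (PS_derive a) y) end.
  2: { unfold plus, opp; simpl. rewrite !Rmult_0_l, Ropp_0, Rplus_0_r. reflexivity. }
  change (scal y (PSeries (PS_derive a) y)) with (y * PSeries (PS_derive a) y) in S2.
  eapply is_series_ext; [| exact S2]. intros n. change (y * (PS_derive a n * y ^ n) = INR (S n) * a (S n) * y ^ (S n)). unfold PS_derive. rewrite <- tech_pow_Rmult. ring. Qed.

Definition pa (beta : R) (n : nat) := / (INR n + 1 + beta).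
Definition PP (beta y : R) := PSeries (pa beta) y.
Definition PPd (beta y : R) := PSeries (PS_derive (pa beta)) y.
Definition QQ (beta y : R) := PSeries (cS beta) y.
Definition QQd (beta y : R) := PSeries (PS_derive (cS beta)) y.

Lemma pa_bd beta : 0 < beta -> forall n, Rabs (pa beta n) <= 1.
Proof. intros Hb n. unfold pa. pose proof (pos_INR n). rewrite Rabs_pos_eq.
  apply (Rmult_le_reg_r (INR n + 1 + beta)). lra. rewrite Rinv_l by lra. lra.
  left; apply Rinv_0_lt_compat; lra. Qed.

Lemma cS_nonneg beta n : 0 < beta -> 0 <= cS beta n.
Proof. intros Hb. unfold cS. pose proof (pos_INR n).
  assert (/ (INR n + 1 + beta) <= / (INR n + 1)) by (apply Rinv_le_contravar; lra). lra. Qed.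

Lemma cS_bd beta : 0 < beta -> forall n, Rabs (cS beta n) <= 1.
Proof. intros Hb n. pose proof (cS_nonneg beta n Hb). unfold cS in *. pose proof (pos_INR n). rewrite Rabs_pos_eq by lra.
  assert (/ (INR n + 1) <= 1). { apply (Rmult_le_reg_r (INR n + 1)). lra. rewrite Rinv_l by lra. lra. }
  assert (0 < / (INR n + 1 + beta)) by (apply Rinv_0_lt_compat; lra). lra. Qed.

Lemma PP_ident beta y : 0 < beta -> Rabs y < 1 -> y * PPd beta y + (1 + beta) * PP beta y = / (1 - y).
Proof. intros Hb Hy.
  assert (R : Rbar_lt (Rabs y) (CV_radius (pa beta))) by (apply rad1; auto; apply pa_bd; auto).
  pose proof (ps_der_shift _ _ R) as S1. pose proof (is_series_scal (1 + beta) _ _ (ps_is _ _ R)) as S2.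
  pose proof (is_series_plus _ _ _ _ S1 S2) as S3.
  assert (S4 : is_series (fun n => y ^ n) (y * PPd beta y + (1 + beta) * PP beta y)).
  { eapply is_series_ext; [| exact S3]. intro n.
    change (INR n * pa beta n * y ^ n + (1 + beta) * (pa beta n * y ^ n) = y ^ n).
    unfold pa. pose proof (pos_INR n). field. lra. }
  pose proof (is_series_unique _ _ S4). pose proof (is_series_unique _ _ (is_series_geom y Hy)). congruence. Qed.

Lemma QQ_ident beta y : 0 < beta -> Rabs y < 1 -> QQ beta y + y * QQd beta y = beta * PP beta y.
Proof. intros Hb Hy.
  assert (R : Rbar_lt (Rabs y) (CV_radius (cS beta))) by (apply rad1; auto; apply cS_bd; auto).
  assert (Rp : Rbar_lt (Rabs y) (CV_radius (pa beta))) by (apply rad1; auto; apply pa_bd; auto).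
  pose proof (is_series_plus _ _ _ _ (ps_is _ _ R) (ps_der_shift _ _ R)) as S3.
  pose proof (is_series_scal beta _ _ (ps_is _ _ Rp)) as S5.
  assert (S4 : is_series (fun n => beta * (pa beta n * y ^ n)) (QQ beta y + y * QQd beta y)).
  { eapply is_series_ext; [| exact S3]. intro n.
    change (cS beta n * y ^ n + INR n * cS beta n * y ^ n = beta * (pa beta n * y ^ n)).
    unfold pa, cS. pose proof (pos_INR n). field. lra. }
  pose proof (is_series_unique _ _ S4) as E1. pose proof (is_series_unique _ _ S5) as E2. unfold PP. rewrite <- E1. exact E2. Qed.

Lemma PP_der beta y : 0 < beta -> Rabs y < 1 -> is_derive (PP beta) y (PPd beta y).
Proof. intros. apply is_derive_PSeries. apply rad1; auto. apply pa_bd; auto. Qed.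
Lemma QQ_der beta y : 0 < beta -> Rabs y < 1 -> is_derive (QQ beta) y (QQd beta y).
Proof. intros. apply is_derive_PSeries. apply rad1; auto. apply cS_bd; auto. Qed.

Lemma A_eq beta t : 0 < beta -> 0 <= t < 1 -> - ln (1 - t) - t * PP beta t = t * QQ beta t.
Proof. intros Hb Ht.
  set (f := fun z => - ln (1 - z) - z * PP beta z - z * QQ beta z).
  assert (Hf : forall z, 0 <= z <= t -> derivable_pt_lim f z 0).
  { intros z Hz. apply is_derive_Reals.
    assert (Hz1 : Rabs z < 1) by (rewrite Rabs_pos_eq; lra).
    pose proof (PP_der beta z Hb Hz1) as D1. pose proof (QQ_der beta z Hb Hz1) as D2.
    unfold f. auto_derive.
    - repeat split; try lra; eexists; eauto.
    - replace (Derive (fun x => PP beta x) z) with (PPd beta z) by (symmetry; apply is_derive_unique; exact D1).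
      replace (Derive (fun x => QQ beta x) z) with (QQd beta z) by (symmetry; apply is_derive_unique; exact D2).
      pose proof (PP_ident beta z Hb Hz1). pose proof (QQ_ident beta z Hb Hz1).
      assert (/ (1 - z) = / (1 + - z)) by (f_equal; ring).
      lra. }
  destruct (Req_dec t 0) as [->|Ht0].
  - rewrite Rminus_0_r, ln_1. ring.
  - destruct (MVT_cor3 f (fun _ => 0) 0 t ltac:(lra) ltac:(intros; apply Hf; lra)) as [c [_ [_ Hc]]].
    unfold f in Hc. rewrite Rminus_0_r, ln_1 in Hc. lra. Qed.

Lemma bern t k : 0 <= t <= 1 -> 1 - INR k * (1 - t) <= t ^ k.
Proof. intros Ht. induction k as [|k IH]. simpl; lra.
  rewrite S_INR. cbn [pow]. pose proof (pos_INR k).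
  assert (t * t ^ k >= t * (1 - INR k * (1 - t))) by (apply Rle_ge, Rmult_le_compat_l; lra).
  assert (0 <= INR k * ((1 - t) * (1 - t))) by (apply Rmult_le_pos; nra).
  nra. Qed.

Lemma part_pow (a : nat -> R) t N : (forall n, 0 <= a n) -> 0 <= t <= 1 ->
  t ^ N * sum_f_R0 a N <= sum_f_R0 (fun n => a n * t ^ n) N.
Proof. intros Ha Ht. induction N as [|N IH]. simpl. lra.
  rewrite !tech5. simpl pow.
  assert (0 <= sum_f_R0 a N) by (apply cond_pos_sum; auto).
  assert (0 <= t ^ N) by (apply pow_le; lra).
  assert (t * (t ^ N * sum_f_R0 a N) <= t ^ N * sum_f_R0 a N) by (assert (0 <= t ^ N * sum_f_R0 a N) by nra; nra).
  pose proof (Ha (S N)). nra. Qed.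

Lemma pow_le1 t n : 0 <= t <= 1 -> 0 <= t ^ n <= 1.
Proof. intros. split. apply pow_le; lra. rewrite <- (pow1 n). apply pow_incr; lra. Qed.

Lemma abel_pos (a : nat -> R) Sv : (forall n, 0 <= a n) -> is_series a Sv ->
  forall eps, 0 < eps -> exists del, 0 < del /\ forall t, 1 - del < t < 1 -> 0 <= t ->
    Rabs (t * PSeries a t - Sv) < eps.
Proof. intros Ha HS eps He.
  pose proof HS as HS'. apply is_series_Reals in HS'.
  destruct (HS' (eps/2) ltac:(lra)) as [N HN]. specialize (HN N (le_n N)).
  assert (PS : forall N', sum_f_R0 a N' <= Sv) by (intro; apply sum_incr; auto).
  assert (S0 : 0 <= Sv) by (pose proof (PS 0%nat); pose proof (Ha 0%nat); simpl in *; lra).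
  set (SN := sum_f_R0 a N) in *. pose proof (PS N) as HSN. fold SN in HSN.
  pose proof (pos_INR N).
  exists (Rmin 1 (eps / (2 * (INR N + 1) * (Sv + 1)))). split.
  { apply Rmin_glb_lt. lra. apply Rdiv_lt_0_compat; [lra| apply Rmult_lt_0_compat; lra]. }
  intros t Ht Ht0.
  pose proof (Rmin_l 1 (eps / (2 * (INR N + 1) * (Sv + 1)))). pose proof (Rmin_r 1 (eps / (2 * (INR N + 1) * (Sv + 1)))).
  assert (Ex : ex_series (fun n => a n * t ^ n)).
  { apply (ex_series_le (V:=R_CompleteNormedModule) (fun n => a n * t ^ n) a). intros n. unfold norm; simpl. unfold abs; simpl.
    pose proof (Ha n). pose proof (pow_le1 t n ltac:(lra)). rewrite Rabs_pos_eq by nra. nra. exists Sv; auto. }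
  pose proof (Series_correct _ Ex) as Ht1. fold (PSeries a t) in Ht1.
  assert (Up : PSeries a t <= Sv).
  { rewrite <- (is_series_unique _ _ HS). apply Series_le. intros n. pose proof (Ha n). pose proof (pow_le1 t n ltac:(lra)). split; nra. exists Sv; auto. }
  apply is_series_Reals in Ht1.
  assert (Lo : sum_f_R0 (fun n => a n * t ^ n) N <= PSeries a t).
  { apply sum_incr; auto. intros n. pose proof (Ha n). pose proof (pow_le1 t n ltac:(lra)). nra. }
  pose proof (part_pow a t N Ha ltac:(lra)) as PP1. fold SN in PP1.
  pose proof (bern t (S N) ltac:(lra)) as B. rewrite S_INR in B. simpl pow in B.
  assert (0 <= SN) by (apply cond_pos_sum; auto).
  assert (T0 : 0 <= PSeries a t) by (assert (0 <= t ^ N * SN) by (apply Rmult_le_pos; [apply pow_le; lra| lra]); lra).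
  assert (Hd : (INR N + 1) * (1 - t) * Sv < eps / 2).
  { assert (H1t : 1 - t < eps / (2 * (INR N + 1) * (Sv + 1))) by lra.
    assert ((INR N + 1) * (1 - t) < eps / (2 * (INR N + 1) * (Sv + 1)) * (INR N + 1)).
    { rewrite (Rmult_comm _ (INR N + 1)). apply Rmult_lt_compat_l; lra. }
    assert (eps / (2 * (INR N + 1) * (Sv + 1)) * (INR N + 1) = eps / (2 * (Sv + 1))) by (field; lra).
    assert (eps / (2 * (Sv + 1)) * Sv < eps / 2).
    { apply (Rmult_lt_reg_r (2 * (Sv + 1))). lra. field_simplify; nra. }
    nra. }
  assert (0 <= SN) by (apply cond_pos_sum; auto).
  assert (t * t ^ N * SN >= (1 - (INR N + 1) * (1 - t)) * SN) by (apply Rle_ge, Rmult_le_compat_r; lra).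
  unfold Rdist in HN. apply Rabs_def2 in HN.
  apply Rabs_def1.
  - nra.
  - assert (t * PSeries a t >= t * (t ^ N * SN)) by (apply Rle_ge, Rmult_le_compat_l; lra).
    assert ((INR N + 1) * (1 - t) * SN <= (INR N + 1) * (1 - t) * Sv) by (apply Rmult_le_compat_l; nra).
    nra. Qed.


Definition Tf (l x : R) := 1 - l / sqrt (l ^ 2 + x ^ 2).
Definition dT (l x : R) := l * x / ((l ^ 2 + x ^ 2) * sqrt (l ^ 2 + x ^ 2)).
Definition fexp (b l x : R) := b * exp (b * ln (Tf l x)) / Tf l x * dT l x.

Lemma sq_facts l x : 0 < l -> 0 < x -> 0 < l ^ 2 + x ^ 2 /\ l < sqrt (l ^ 2 + x ^ 2) /\ x < sqrt (l ^ 2 + x ^ 2)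
  /\ sqrt (l ^ 2 + x ^ 2) * sqrt (l ^ 2 + x ^ 2) = l ^ 2 + x ^ 2.
Proof. intros Hl Hx. assert (P : 0 < l ^ 2 + x ^ 2) by nra.
  pose proof (sqrt_sqrt (l ^ 2 + x ^ 2) ltac:(lra)) as E. pose proof (sqrt_pos (l ^ 2 + x ^ 2)).
  repeat split; auto; nra. Qed.

Lemma Tf_range l x : 0 < l -> 0 < x -> 0 < Tf l x < 1.
Proof. intros Hl Hx. destruct (sq_facts l x Hl Hx) as [P [A [B E]]]. unfold Tf.
  split.
  - assert (l / sqrt (l ^ 2 + x ^ 2) < 1). { apply (Rmult_lt_reg_r (sqrt (l ^ 2 + x ^ 2))). lra. unfold Rdiv. rewrite Rmult_assoc, Rinv_l; lra. }
    lra.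
  - assert (0 < l / sqrt (l ^ 2 + x ^ 2)) by (apply Rdiv_lt_0_compat; lra). lra. Qed.

Lemma Tf_der l x : 0 < l -> 0 < x -> is_derive (Tf l) x (dT l x).
Proof. intros Hl Hx. destruct (sq_facts l x Hl Hx) as [P [A [B E]]]. unfold Tf, dT. auto_derive.
  - replace (l * (l * 1) + x * (x * 1)) with (l ^ 2 + x ^ 2) by ring. repeat split; lra.
  - replace (l * (l * 1) + x * (x * 1)) with (l ^ 2 + x ^ 2) by ring. rewrite E. field. lra. Qed.

Lemma cdf_der b l x : 0 < l -> 0 < x -> derivable_pt_lim (ECR_cdf b l) x (fexp b l x).
Proof. intros Hl Hx. apply is_derive_Reals. pose proof (Tf_range l x Hl Hx).
  pose proof (Tf_der l x Hl Hx) as D.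
  unfold ECR_cdf, Rpower. fold (Tf l x).
  change (fun x0 => exp (b * ln (1 - l / sqrt (l ^ 2 + x0 ^ 2)))) with (fun x0 => exp (b * ln (Tf l x0))).
  auto_derive.
  - repeat split. eexists; eauto. lra.
  - replace (Derive (fun x0 => Tf l x0) x) with (dT l x) by (symmetry; apply is_derive_unique; exact D). unfold fexp. field. lra. Qed.

Definition Hf (b l t : R) := exp (b * ln t) * (ln l - / (2 * b) + / 2 * ln t + / 2 * ln (2 - t) - ln (1 - t)
   - t * PP b t + / 4 * (t * PP b (t / 2))).
Definition ell (l t : R) := ln l + / 2 * ln t + / 2 * ln (2 - t) - ln (1 - t).

Lemma PPd_eq b y : 0 < b -> 0 < y < 1 -> PPd b y = (/ (1 - y) - (1 + b) * PP b y) / y.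
Proof. intros Hb Hy. pose proof (PP_ident b y Hb ltac:(rewrite Rabs_pos_eq; lra)).
  replace (PPd b y) with ((y * PPd b y) / y) by (field; lra). f_equal. lra. Qed.

Lemma H_der b l t : 0 < b -> 0 < t < 1 -> is_derive (Hf b l) t (b * exp (b * ln t) / t * ell l t).
Proof. intros Hb Ht.
  assert (H1 : Rabs t < 1) by (rewrite Rabs_pos_eq; lra).
  assert (H2 : Rabs (t / 2) < 1) by (rewrite Rabs_pos_eq; lra).
  pose proof (PP_der b t Hb H1) as D1. pose proof (PP_der b (t/2) Hb H2) as D2.
  unfold Hf. auto_derive.
  - repeat split; try lra; eexists; eauto.
  - replace (Derive (fun x => PP b x) t) with (PPd b t) by (symmetry; apply is_derive_unique; exact D1).
    replace (Derive (fun x => PP b x) (t * / 2)) with (PPd b (t / 2)) by (symmetry; apply is_derive_unique; exact D2).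
    rewrite (PPd_eq b t), (PPd_eq b (t / 2)) by (auto; lra).
    unfold ell, Rdiv, Rminus. field. lra. Qed.

Lemma ell_Tf l x : 0 < l -> 0 < x -> ell l (Tf l x) = ln x.
Proof. intros Hl Hx. destruct (sq_facts l x Hl Hx) as [P [A [B E]]].
  set (s := sqrt (l ^ 2 + x ^ 2)) in *. pose proof (Tf_range l x Hl Hx) as TR.
  unfold ell. unfold Tf in *. fold s in TR |- *.
  assert (E1 : (1 - l / s) * (2 - (1 - l / s)) = (x / s) * (x / s)).
  { replace ((1 - l / s) * (2 - (1 - l / s))) with ((s * s - l * l) / (s * s)) by (field; lra).
    replace ((x / s) * (x / s)) with (x * x / (s * s)) by (field; lra). rewrite E. field. lra. }
  assert (E2 : ln (1 - l / s) + ln (2 - (1 - l / s)) = 2 * (ln x - ln s)).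
  { rewrite <- ln_mult by lra. rewrite E1. rewrite ln_mult by (apply Rdiv_lt_0_compat; lra).
    rewrite ln_div by lra. ring. }
  replace (1 - (1 - l / s)) with (l / s) by ring. rewrite ln_div by lra.
  lra. Qed.

Definition Wf (b l x : R) := Hf b l (Tf l x).

Lemma W_der b l x : 0 < b -> 0 < l -> 0 < x -> is_derive (Wf b l) x (ln x * fexp b l x).
Proof. intros Hb Hl Hx. pose proof (Tf_range l x Hl Hx).
  pose proof (is_derive_comp (Hf b l) (Tf l) x _ _ (H_der b l (Tf l x) Hb H) (Tf_der l x Hl Hx)) as D.
  assert (Ev : ln x * fexp b l x = dT l x * (b * exp (b * ln (Tf l x)) / Tf l x * ell l (Tf l x))).
  { rewrite ell_Tf by auto. unfold fexp. ring. }
  rewrite Ev. exact D. Qed.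

Lemma g_cont b l x : 0 < l -> 0 < x -> continuous (fun x => ln x * fexp b l x) x.
Proof. intros Hl Hx. destruct (sq_facts l x Hl Hx) as [P [A [B E]]]. pose proof (Tf_range l x Hl Hx) as TR.
  apply ctn. unfold fexp, Tf, dT in *. auto_derive.
  replace (l * (l * 1) + x * (x * 1)) with (l ^ 2 + x ^ 2) by ring. assert (0 < (l ^ 2 + x ^ 2) * sqrt (l ^ 2 + x ^ 2)) by (apply Rmult_lt_0_compat; lra). repeat split; lra. Qed.

Lemma FTC b l a c : 0 < b -> 0 < l -> 0 < a -> 0 < c ->
  RInt (fun x => ln x * fexp b l x) a c = Wf b l c - Wf b l a.
Proof. intros Hb Hl Ha Hc. apply is_RInt_unique.
  apply (is_RInt_derive (V:=R_CompleteNormedModule) (Wf b l)).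
  - intros x Hx. assert (0 < x) by (unfold Rmin, Rmax in Hx; destruct (Rle_dec a c); lra). apply W_der; auto.
  - intros x Hx. assert (0 < x) by (unfold Rmin, Rmax in Hx; destruct (Rle_dec a c); lra). apply g_cont; auto. Qed.

Lemma cont_eps (f : R -> R) x0 : continuous f x0 -> forall eps, 0 < eps -> exists del, 0 < del /\
  forall x, Rabs (x - x0) < del -> Rabs (f x - f x0) < eps.
Proof. intros C eps He. apply continuity_pt_filterlim in C.
  destruct (C eps He) as [alp [Ha H]]. exists alp. split; auto.
  intros x Hx. destruct (Req_dec x x0) as [->|Hne].
  - rewrite Rminus_diag, Rabs_R0. auto.
  - apply H. split. split. exact I. auto. exact Hx. Qed.

Lemma PP_bd b y : 0 < b -> Rabs y <= / 2 -> Rabs (PP b y) <= 2.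
Proof. intros Hb Hy.
  assert (R : Rbar_lt (Rabs y) (CV_radius (pa b))) by (apply rad1; [apply pa_bd; auto| lra]).
  unfold PP, PSeries. eapply Rle_trans. apply Series_Rabs. apply CV_disk_inside; auto.
  assert (Hy1 : Rabs (Rabs y) < 1) by (rewrite Rabs_Rabsolu; lra).
  eapply Rle_trans. apply (Series_le _ (fun n => Rabs y ^ n)).
  - intro n. split. apply Rabs_pos. rewrite Rabs_mult, RPow_abs.
    pose proof (pa_bd b Hb n). pose proof (Rabs_pos (y ^ n)). pose proof (Rabs_pos (pa b n)). nra.
  - apply ex_series_geom; auto.
  - rewrite (is_series_unique _ _ (is_series_geom _ Hy1)). pose proof (Rabs_pos y).
    apply (Rmult_le_reg_r (1 - Rabs y)). lra. rewrite Rinv_l by lra. lra. Qed.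

Lemma Rabs_le_inv a b : Rabs a <= b -> - b <= a <= b.
Proof. intro H. pose proof (Rle_abs a). pose proof (Rle_abs (- a)). rewrite Rabs_Ropp in H1. lra. Qed.

Lemma H_small b l : 0 < b -> 0 < l -> forall eps, 0 < eps -> exists tau, 0 < tau /\ tau <= / 2 /\
  forall t, 0 < t < tau -> Rabs (Hf b l t) < eps.
Proof. intros Hb Hl eps He.
  set (K0 := Rabs (ln l) + / (2 * b) + 5). set (K1 := K0 + / b).
  assert (Hib : 0 < / b) by (apply Rinv_0_lt_compat; lra).
  assert (Hib2 : 0 < / (2 * b)) by (apply Rinv_0_lt_compat; lra).
  assert (HK0 : 0 < K0) by (unfold K0; pose proof (Rabs_pos (ln l)); lra).
  assert (HK1 : 0 < K1) by (unfold K1; lra).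
  exists (Rmin (/ 2) (exp (2 / b * ln (eps / K1)))). split; [|split].
  { apply Rmin_glb_lt. lra. apply exp_pos. } { apply Rmin_l. }
  intros t Ht. pose proof (Rmin_l (/ 2) (exp (2 / b * ln (eps / K1)))). pose proof (Rmin_r (/ 2) (exp (2 / b * ln (eps / K1)))).
  assert (Ht1 : 0 < t <= / 2) by lra.
  set (X := ln l - / (2 * b) + / 2 * ln (2 - t) - ln (1 - t) - t * PP b t + / 4 * (t * PP b (t / 2))).
  assert (HX : Rabs X <= K0).
  { assert (L1 : 0 <= ln (2 - t) <= 1). { split. rewrite <- ln_1. apply ln_le; lra. pose proof (ln_le_sub1 (2 - t) ltac:(lra)). lra. }
    assert (L2 : 0 <= - ln (1 - t) <= 1). { split. assert (ln (1 - t) <= ln 1) by (apply ln_le; lra). rewrite ln_1 in H1. lra.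
      rewrite <- ln_Rinv by lra. pose proof (ln_le_sub1 (/ (1 - t)) ltac:(apply Rinv_0_lt_compat; lra)).
      assert (/ (1 - t) <= 2). { apply (Rmult_le_reg_r (1 - t)). lra. rewrite Rinv_l by lra. lra. } lra. }
    pose proof (PP_bd b t Hb ltac:(rewrite Rabs_pos_eq; lra)) as B1. pose proof (PP_bd b (t/2) Hb ltac:(rewrite Rabs_pos_eq; lra)) as B2.
    assert (B3 : Rabs (t * PP b t) <= 1) by (rewrite Rabs_mult, (Rabs_pos_eq t) by lra; nra).
    assert (B4 : Rabs (t * PP b (t/2)) <= 1) by (rewrite Rabs_mult, (Rabs_pos_eq t) by lra; nra).
    apply Rabs_le_inv in B3. apply Rabs_le_inv in B4.
    pose proof (Rle_abs (ln l)) as Q1. pose proof (Rle_abs (- ln l)) as Q2. rewrite Rabs_Ropp in Q2.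
    unfold X, K0. apply Rabs_le. lra. }
  assert (EH : Hf b l t = exp (b * ln t) * (X + / 2 * ln t)) by (unfold Hf, X; ring).
  assert (Hlt : ln t < 0) by (rewrite <- ln_1; apply ln_increasing; lra).
  set (y := exp (- (b / 2) * ln t)).
  assert (Hy : 0 < y) by apply exp_pos.
  assert (Hly : - ln t <= 2 / b * y).
  { pose proof (ln_le_sub1 y Hy). unfold y in H1 at 1. rewrite ln_exp in H1.
    apply (Rmult_le_reg_l (b / 2)). apply Rdiv_lt_0_compat; lra.
    replace (b / 2 * (2 / b * y)) with y by (field; lra). lra. }
  assert (E1 : exp (b * ln t) * y = exp (b / 2 * ln t)) by (unfold y; rewrite <- exp_plus; f_equal; field).
  assert (E2 : exp (b * ln t) <= exp (b / 2 * ln t)).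
  { destruct (Req_dec (b * ln t) (b / 2 * ln t)) as [e|ne]. rewrite e; lra. left. apply exp_increasing. nra. }
  assert (Hfin : exp (b / 2 * ln t) < eps / K1).
  { apply exp_lt_of. apply Rdiv_lt_0_compat; lra.
    assert (ln t < 2 / b * ln (eps / K1)). { rewrite <- (ln_exp (2 / b * ln (eps / K1))). apply ln_increasing; lra. }
    replace (ln (eps / K1)) with (b / 2 * (2 / b * ln (eps / K1))) by (field; lra).
    apply Rmult_lt_compat_l. apply Rdiv_lt_0_compat; lra. auto. }
  rewrite EH. rewrite Rabs_mult, (Rabs_pos_eq (exp _)) by (left; apply exp_pos).
  pose proof (exp_pos (b * ln t)) as Ep.
  assert (Rabs (X + / 2 * ln t) <= K0 + / 2 * (- ln t)).
  { eapply Rle_trans. apply Rabs_triang. rewrite Rabs_mult, (Rabs_pos_eq (/ 2)) by lra. rewrite (Rabs_left (ln t)) by lra. lra. }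
  assert (exp (b * ln t) * Rabs (X + / 2 * ln t) <= exp (b * ln t) * (K0 + / 2 * (- ln t))) by (apply Rmult_le_compat_l; lra).
  assert (exp (b * ln t) * (- ln t) <= exp (b * ln t) * (2 / b * y)) by (apply Rmult_le_compat_l; lra).
  assert (exp (b * ln t) * (2 / b * y) = 2 / b * exp (b / 2 * ln t)) by (rewrite <- E1; ring).
  assert (exp (b * ln t) * K0 <= exp (b / 2 * ln t) * K0) by (apply Rmult_le_compat_r; lra).
  assert (K1 * exp (b / 2 * ln t) < eps).
  { apply (Rmult_lt_reg_r (/ K1)). apply Rinv_0_lt_compat; lra.
    replace (K1 * exp (b / 2 * ln t) * / K1) with (exp (b / 2 * ln t)) by (field; lra). exact Hfin. }
  unfold K1 in *. replace (2 / b) with (2 * / b) in * by (unfold Rdiv; ring). nra. Qed.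

Lemma Tf_le l x : 0 < l -> 0 < x -> Tf l x <= x ^ 2 / l ^ 2.
Proof. intros Hl Hx. destruct (sq_facts l x Hl Hx) as [P [A [B E]]].
  set (s := sqrt (l ^ 2 + x ^ 2)) in *. unfold Tf. fold s.
  replace (1 - l / s) with ((s * s - l * l) / (s * (s + l))) by (field; lra). rewrite E.
  replace (l ^ 2 + x ^ 2 - l * l) with (x ^ 2) by ring.
  unfold Rdiv. apply Rmult_le_compat_l. nra. apply Rinv_le_contravar. nra. nra. Qed.

Lemma Tf_ge l x : 0 < l -> 0 < x -> 1 - l / x <= Tf l x.
Proof. intros Hl Hx. destruct (sq_facts l x Hl Hx) as [P [A [B E]]]. unfold Tf.
  assert (l / sqrt (l ^ 2 + x ^ 2) <= l / x). { unfold Rdiv. apply Rmult_le_compat_l. lra. apply Rinv_le_contravar; lra. }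
  lra. Qed.

Lemma W_small b l : 0 < b -> 0 < l -> forall eps, 0 < eps -> exists d, 0 < d /\ d <= 1 /\
  forall x, 0 < x < d -> Rabs (Wf b l x) < eps.
Proof. intros Hb Hl eps He. destruct (H_small b l Hb Hl eps He) as [tau [Ht [Ht2 H]]].
  exists (Rmin 1 (l ^ 2 * tau)). assert (0 < l ^ 2) by nra.
  split. apply Rmin_glb_lt. lra. nra. split. apply Rmin_l.
  intros x Hx. pose proof (Rmin_l 1 (l ^ 2 * tau)). pose proof (Rmin_r 1 (l ^ 2 * tau)).
  unfold Wf. apply H. pose proof (Tf_range l x Hl ltac:(lra)). pose proof (Tf_le l x Hl ltac:(lra)).
  split. lra.
  assert (x ^ 2 / l ^ 2 < tau).
  { apply (Rmult_lt_reg_r (l ^ 2)). auto. unfold Rdiv. rewrite Rmult_assoc, Rinv_l by lra. nra. }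
  lra. Qed.

Lemma H_near1 b l Sv : 0 < b -> 0 < l -> is_series (cS b) Sv ->
  forall eps, 0 < eps -> exists del, 0 < del /\ del <= 1 /\ forall t, 1 - del < t < 1 ->
    Rabs (Hf b l t - (ln l - / (2 * b) + / 4 * PP b (/ 2) + Sv)) < eps.
Proof. intros Hb Hl HS eps He.
  set (L := ln l - / (2 * b) + / 4 * PP b (/ 2) + Sv).
  set (c1 := fun t => exp (b * ln t)).
  set (c2 := fun t => / 2 * ln t + / 2 * ln (2 - t) + / 4 * (t * PP b (t / 2))).
  assert (C1 : continuous c1 1) by (apply ctn; unfold c1; auto_derive; lra).
  assert (C2 : continuous c2 1).
  { apply ctn. unfold c2. auto_derive. repeat split; try lra.
    exists (PPd b (1 * / 2)). apply PP_der; auto. rewrite Rabs_pos_eq; lra. }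
  assert (V1 : c1 1 = 1) by (unfold c1; rewrite ln_1, Rmult_0_r, exp_0; auto).
  assert (V2 : c2 1 = / 4 * PP b (/ 2)). { unfold c2. cbv beta. replace (2 - 1) with 1 by ring. rewrite ln_1. replace (1 / 2) with (/ 2) by field. ring. }
  set (e1 := Rmin 1 (eps / (Rabs L + 5))).
  assert (He1 : 0 < e1) by (apply Rmin_glb_lt; [lra| apply Rdiv_lt_0_compat; pose proof (Rabs_pos L); lra]).
  pose proof (Rmin_l 1 (eps / (Rabs L + 5))) as E1a. pose proof (Rmin_r 1 (eps / (Rabs L + 5))) as E1b. fold e1 in E1a, E1b.
  destruct (cont_eps c1 1 C1 e1 He1) as [d1 [Hd1 K1]].
  destruct (cont_eps c2 1 C2 e1 He1) as [d2 [Hd2 K2]].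
  destruct (abel_pos (cS b) Sv (fun n => cS_nonneg b n Hb) HS e1 He1) as [d3 [Hd3 K3]].
  exists (Rmin (Rmin d1 d2) (Rmin d3 1)). split. repeat apply Rmin_glb_lt; lra. split.
  { eapply Rle_trans. apply Rmin_r. apply Rmin_r. }
  intros t Ht.
  pose proof (Rmin_l (Rmin d1 d2) (Rmin d3 1)). pose proof (Rmin_r (Rmin d1 d2) (Rmin d3 1)).
  pose proof (Rmin_l d1 d2). pose proof (Rmin_r d1 d2). pose proof (Rmin_l d3 1). pose proof (Rmin_r d3 1).
  assert (Ht0 : 0 < t) by lra.
  assert (Hd : Rabs (t - 1) < d1 /\ Rabs (t - 1) < d2) by (rewrite Rabs_left by lra; lra).
  specialize (K1 t (proj1 Hd)). specialize (K2 t (proj2 Hd)). specialize (K3 t ltac:(lra) ltac:(lra)).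
  rewrite V1 in K1. rewrite V2 in K2.
  assert (EH : Hf b l t = c1 t * ((ln l - / (2 * b)) + c2 t + t * QQ b t)).
  { rewrite <- A_eq by (auto; lra). unfold Hf, c1, c2. ring. }
  fold (QQ b t) in K3.
  set (B := (ln l - / (2 * b)) + c2 t + t * QQ b t) in *.
  assert (HB : Rabs (B - L) < 2 * e1).
  { replace (B - L) with ((c2 t - / 4 * PP b (/ 2)) + (t * QQ b t - Sv)) by (unfold B, L; ring).
    eapply Rle_lt_trans. apply Rabs_triang. lra. }
  assert (HBa : Rabs B <= Rabs L + 2).
  { replace B with (L + (B - L)) by ring. eapply Rle_trans. apply Rabs_triang. lra. }
  rewrite EH. replace (c1 t * B - L) with ((c1 t - 1) * B + (B - L)) by ring.
  eapply Rle_lt_trans. apply Rabs_triang. rewrite Rabs_mult.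
  assert (Rabs (c1 t - 1) * Rabs B <= e1 * (Rabs L + 2)).
  { apply Rmult_le_compat; try apply Rabs_pos; lra. }
  assert (e1 * (Rabs L + 5) <= eps).
  { pose proof (Rabs_pos L). apply (Rmult_le_reg_r (/ (Rabs L + 5))). apply Rinv_0_lt_compat; lra.
    rewrite Rmult_assoc, Rinv_r by lra. rewrite Rmult_1_r. exact E1b. }
  pose proof (Rabs_pos L). nra. Qed.

Lemma Phi_eq b Phi : 0 < b -> is_Lerch (1 / 2) 1 b Phi -> Phi = / b + / 2 * PP b (/ 2).
Proof. intros Hb HP. unfold is_Lerch in HP. apply is_series_Reals in HP.
  set (a := fun n => (1 / 2) ^ n / Rpower (INR n + b) 1) in HP.
  assert (Ha0 : a 0%nat = / b) by (unfold a; simpl; rewrite Rpower_1 by lra; field; lra).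
  assert (HT : is_series (fun k => a (S k)) (Phi - / b)).
  { apply is_series_incr_1. match goal with |- is_series _ ?l => replace l with Phi end. exact HP.
    unfold plus; simpl. rewrite Ha0. ring. }
  assert (R : Rbar_lt (Rabs (/ 2)) (CV_radius (pa b))) by (apply rad1; [apply pa_bd; auto| rewrite Rabs_pos_eq; lra]).
  pose proof (is_series_scal (/ 2) _ _ (ps_is _ _ R)) as S2.
  assert (S3 : is_series (fun k => a (S k)) (/ 2 * PP b (/ 2))).
  { eapply is_series_ext; [| exact S2]. intro n. unfold a. change (/ 2 * (pa b n * (/ 2) ^ n) = (1 / 2) ^ S n / Rpower (INR (S n) + b) 1).
    rewrite Rpower_1 by (pose proof (pos_INR (S n)); lra). unfold pa. rewrite S_INR. simpl pow.
    pose proof (pos_INR n). replace (1 / 2) with (/ 2) by field. field. lra. }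
  pose proof (is_series_unique _ _ HT). pose proof (is_series_unique _ _ S3). lra. Qed.

Theorem proposition6 (beta lambda : R) (hbeta : 0 < beta) (hlambda : 0 < lambda)
    (f : R -> R)
    (hf : forall x : R, 0 < x -> derivable_pt_lim (ECR_cdf beta lambda) x (f x))
    (G : R -> R) (hG : is_Gamma G) (dG : R)
    (hdG : derivable_pt_lim G (1 + beta) dG)
    (g : R) (hg : is_euler_gamma g)
    (Phi : R) (hPhi : is_Lerch (1/2) 1 beta Phi) :
  improper_int_0_inf (fun x => ln x * f x)
    (ln lambda + (1/2) * Phi + dG / G (1 + beta) + g - 1 / beta).
Proof.
  pose proof (S_series G beta dG g hG hbeta hdG hg) as HS.
  pose proof (Phi_eq beta Phi hbeta hPhi) as HPhi.
  assert (EL : ln lambda + (1/2) * Phi + dG / G (1 + beta) + g - 1 / beta =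
     ln lambda - / (2 * beta) + / 4 * PP beta (/ 2) + (dG / G (1 + beta) + g)).
  { rewrite HPhi. pose proof (G_pos G (1 + beta) hG ltac:(lra)). field. lra. }
  rewrite EL. set (L := ln lambda - / (2 * beta) + / 4 * PP beta (/ 2) + (dG / G (1 + beta) + g)).
  assert (Hfe : forall x, 0 < x -> f x = fexp beta lambda x).
  { intros x Hx. apply (uniqueness_limite (ECR_cdf beta lambda) x). apply hf; auto. apply cdf_der; auto. }
  intros eps He.
  destruct (W_small beta lambda hbeta hlambda (eps/2) ltac:(lra)) as [d [Hd [Hd1 Wd]]].
  destruct (H_near1 beta lambda _ hbeta hlambda HS (eps/2) ltac:(lra)) as [del [Hdel [Hdel1 Hn]]].
  exists d, (Rmax 1 (lambda / del)). split; auto.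
  intros a b Ha Had Hb.
  pose proof (Rmax_l 1 (lambda / del)). pose proof (Rmax_r 1 (lambda / del)).
  assert (Hab : a < b) by lra.
  assert (Ex : ex_RInt (fun x => ln x * fexp beta lambda x) a b).
  { apply (ex_RInt_continuous (V:=R_CompleteNormedModule)). intros z Hz.
    unfold Rmin in Hz. destruct (Rle_dec a b); [| lra]. apply g_cont; auto; lra. }
  assert (Ext : forall x, Rmin a b < x < Rmax a b -> ln x * fexp beta lambda x = ln x * f x).
  { intros x Hx. unfold Rmin in Hx. destruct (Rle_dec a b); [| lra]. rewrite Hfe; auto. lra. }
  assert (Ex2 : ex_RInt (fun x => ln x * f x) a b) by (eapply ex_RInt_ext; [exact Ext| exact Ex]).
  exists (ex_RInt_Reals_0 _ _ _ Ex2).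
  rewrite <- RInt_Reals.
  rewrite <- (RInt_ext (V:=R_CompleteNormedModule) _ _ a b Ext).
  rewrite FTC by (auto; lra).
  specialize (Wd a ltac:(lra)).
  assert (Hb1 : 1 - del < Tf lambda b < 1).
  { pose proof (Tf_range lambda b hlambda ltac:(lra)). pose proof (Tf_ge lambda b hlambda ltac:(lra)).
    assert (lambda / b < del).
    { apply (Rmult_lt_reg_r b). lra. unfold Rdiv. rewrite Rmult_assoc, Rinv_l by lra.
      assert (lambda / del < b) by lra.
      apply (Rmult_lt_reg_r (/ del)). apply Rinv_0_lt_compat; lra.
      replace (lambda * 1 * / del) with (lambda / del) by (unfold Rdiv; ring).
      replace (del * b * / del) with b by (field; lra). lra. }
    lra. }
  specialize (Hn _ Hb1). fold L in Hn. unfold Wf in *.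
  apply Rabs_def2 in Hn. apply Rabs_def2 in Wd. apply Rabs_def1; lra.
Qed.
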